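(* Let $X$ be a simplicial complex with vertex set $V$ and $1$-skeleton $\mathcal G$, and let $\hat d$ be a metric on $V$ such that for some constant $C>0$, $\hat d(u,v)\le C\,d_{\mathcal G}(u,v)$ for all $u,v\in V$. If $x,y\in X$ have disjoint supports, then \[\hat D(x,y)\le 3C\,d_X(x,y).\]
   Context: Points $x\in X$ have barycentric coordinates $(x_u)_{u\in V}$ (finitely many nonzero, summing to $1$); $\mathrm{supp}(x)=\{u\in V:x_u\neq0\}$. $\hat D(x,y)=\sum_{u,v\in V}x_uy_v\,\hat d(u,v)$. $d_{\mathcal G}$ is the word metric on the $1$-skeleton (every edge length $1$). For a simplex $\sigma$ and $x,y\in\sigma$, $d_\sigma(x,y)=\tfrac12\sum_{u\in V(\sigma)}|x_u-y_u|$; a path from $x$ to $y$ is a sequence $x=a_0,\dots,a_r=y$ with consecutive points in a common simplex $\sigma_i$, of length $\sum_i d_{\sigma_i}(a_{i-1},a_i)$; the $\ell^1$-path metric $d_X(x,y)$ is the infimum of lengths of such paths. *)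

(* Defs.v *)
From Stdlib Require Import Reals List.
Import ListNotations.
Open Scope R_scope.
Set Implicit Arguments.

Definition lsum {V : Type} (f : V -> R) (l : list V) : R :=
  fold_right (fun u acc => f u + acc) 0 l.

Record SComplex (V : Type) := {
  simplex : list V -> Prop;
  simplex_nonempty : forall s, simplex s -> s <> nil;
  simplex_sub : forall s t, simplex s -> t <> nil -> incl t s -> simplex t;
  simplex_vert : forall v, simplex [v]
}.

Definition is_metric {V : Type} (d : V -> V -> R) : Prop :=
  (forall u v, 0 <= d u v) /\
  (forall u v, d u v = 0 <-> u = v) /\
  (forall u v, d u v = d v u) /\
  (forall u v w, d u w <= d u v + d v w).

Inductive walk {V : Type} (K : SComplex V) : V -> V -> nat -> Prop :=
| walk_nil : forall u, walk K u u 0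
| walk_cons : forall u w v n, simplex K [u; w] -> walk K w v n -> walk K u v (S n).

(* d_G(u,v) = n : word metric on the 1-skeleton (edge length 1). *)
Definition dG_is {V : Type} (K : SComplex V) (u v : V) (n : nat) : Prop :=
  walk K u v n /\ (forall m, walk K u v m -> (n <= m)%nat).

(* x (barycentric coordinates) is a point of the simplex sigma
   (sigma a simplex listed without repetition). *)
Definition in_simplex {V : Type} (K : SComplex V) (sigma : list V) (x : V -> R) : Prop :=
  simplex K sigma /\ NoDup sigma /\
  (forall u, 0 <= x u) /\
  (forall u, x u <> 0 -> In u sigma) /\
  lsum x sigma = 1.

Definition is_point {V : Type} (K : SComplex V) (x : V -> R) : Prop :=
  exists sigma, in_simplex K sigma x.

Definition d_simplex {V : Type} (sigma : list V) (x y : V -> R) : R :=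
  / 2 * lsum (fun u => Rabs (x u - y u)) sigma.

(* is_path K x y L : there is a path x = a_0, ..., a_r = y (consecutive points
   in a common simplex sigma_i) of length L = sum_i d_{sigma_i}(a_{i-1}, a_i). *)
Inductive is_path {V : Type} (K : SComplex V) : (V -> R) -> (V -> R) -> R -> Prop :=
| path_nil : forall x, is_point K x -> is_path K x x 0
| path_cons : forall x a y sigma L,
    in_simplex K sigma x -> in_simplex K sigma a -> is_path K a y L ->
    is_path K x y (d_simplex sigma x a + L).

Definition dX_is {V : Type} (K : SComplex V) (x y : V -> R) (d : R) : Prop :=
  (forall L, is_path K x y L -> d <= L) /\
  (forall d', (forall L, is_path K x y L -> d' <= L) -> d' <= d).

(* \hat D(x,y) = sum_{u,v} x_u y_v dhat(u,v), with the sums taken over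
   (duplicate-free) lists sx, sy containing the supports of x and y. *)
Definition Dhat {V : Type} (dh : V -> V -> R) (x : V -> R) (sx : list V)
  (y : V -> R) (sy : list V) : R :=
  lsum (fun u => lsum (fun v => x u * y v * dh u v) sy) sx.

(* Main.v *)
Require Import Defs.
From Stdlib Require Import Reals List Lra Lia Permutation Classical.
Open Scope R_scope.
Import ListNotations.

Lemma lsum_ext {V} (f g : V -> R) l : (forall u, In u l -> f u = g u) -> lsum f l = lsum g l.
Proof. induction l; simpl; intros H; auto. rewrite H by auto. rewrite IHl; auto. Qed.

Lemma lsum_le {V} (f g : V -> R) l : (forall u, In u l -> f u <= g u) -> lsum f l <= lsum g l.
Proof. induction l; simpl; intros H; [lra|]. assert (f a <= g a) by auto.
  assert (lsum f l <= lsum g l) by auto. lra. Qed.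

Lemma lsum_scal {V} (f : V -> R) c l : lsum (fun u => c * f u) l = c * lsum f l.
Proof. induction l; simpl; [ring|]. rewrite IHl; ring. Qed.

Lemma lsum_abs {V} (f : V -> R) l : Rabs (lsum f l) <= lsum (fun u => Rabs (f u)) l.
Proof. induction l; simpl. rewrite Rabs_R0; lra.
  eapply Rle_trans; [apply Rabs_triang|]. lra. Qed.

Lemma lsum_diff {V} (f x a : V -> R) c l :
  lsum (fun w => f w * x w) l - lsum (fun w => f w * a w) l =
  lsum (fun w => (f w - c) * (x w - a w)) l + c * (lsum x l - lsum a l).
Proof. induction l; simpl; [ring|]. 
  set (A := lsum (fun w => f w * x w) l) in *. set (B := lsum (fun w => f w * a w) l) in *.
  set (D := lsum (fun w => (f w - c) * (x w - a w)) l) in *. nra. Qed.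

Lemma lsum_perm {V} (f : V -> R) l1 l2 : Permutation l1 l2 -> lsum f l1 = lsum f l2.
Proof. induction 1; simpl; try lra. Qed.

Definition nzb {V} (g : V -> R) u : bool := if Req_EM_T (g u) 0 then false else true.

Lemma lsum_filter {V} (g : V -> R) l : lsum g l = lsum g (filter (nzb g) l).
Proof. induction l; simpl; auto. unfold nzb at 1. destruct (Req_EM_T (g a) 0).
  rewrite e, IHl; ring. simpl. rewrite IHl; auto. Qed.

Lemma lsum_indep {V} (g : V -> R) l1 l2 : NoDup l1 -> NoDup l2 ->
  (forall u, g u <> 0 -> In u l1) -> (forall u, g u <> 0 -> In u l2) ->
  lsum g l1 = lsum g l2.
Proof. intros N1 N2 H1 H2. rewrite (lsum_filter g l1), (lsum_filter g l2).
  apply lsum_perm. apply NoDup_Permutation; try apply NoDup_filter; auto.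
  intro u; rewrite !filter_In; unfold nzb; destruct (Req_EM_T (g u) 0); intuition.
Qed.

Lemma list_min {V} (f : V -> R) l : l <> nil -> exists m, In m l /\ forall w, In w l -> f m <= f w.
Proof. induction l; intros H; [congruence|]. destruct l as [|b l].
  - exists a; split; [left; auto|]. intros w [<-|[]]; lra.
  - destruct IHl as [m [Hm Hm']]; [discriminate|].
    destruct (Rle_dec (f a) (f m)).
    + exists a; split; [left; auto|]. intros w [<-|Hw]; [lra|]. specialize (Hm' w Hw); lra.
    + exists m; split; [right; auto|]. intros w [<-|Hw]; [lra|auto].
Qed.

Section Lip.
Variable V : Type.
Variable K : SComplex V.
Variable f : V -> R.
Hypothesis Wf : forall s, simplex K s -> forall u v, In u s -> In v s -> f u - f v <= 1.

Lemma step_lip s x a : in_simplex K s x -> in_simplex K s a ->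
  Rabs (lsum (fun w => f w * x w) s - lsum (fun w => f w * a w) s) <= d_simplex s x a.
Proof.
  intros [Hs [_ [_ [_ Hx]]]] [_ [_ [_ [_ Ha]]]].
  destruct (list_min f s (simplex_nonempty K Hs)) as [m [Hm Hm']].
  rewrite (lsum_diff f x a (f m + /2)). rewrite Hx, Ha.
  replace (1-1) with 0 by ring. rewrite Rmult_0_r, Rplus_0_r.
  eapply Rle_trans; [apply lsum_abs|]. unfold d_simplex. rewrite <- lsum_scal.
  apply lsum_le. intros u Hu. rewrite Rabs_mult.
  apply Rmult_le_compat_r; [apply Rabs_pos|].
  specialize (Hm' u Hu). specialize (Wf s Hs u m Hu Hm).
  apply Rabs_le; lra.
Qed.

Lemma path_lip x y L : is_path K x y L -> forall sx sy, in_simplex K sx x -> in_simplex K sy y ->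
  Rabs (lsum (fun w => f w * x w) sx - lsum (fun w => f w * y w) sy) <= L.
Proof.
  induction 1; intros sx sy Hx Hy.
  - rewrite (lsum_indep (fun w => f w * x w) sx sy).
    + replace (_ - _) with 0 by ring. rewrite Rabs_R0; lra.
    + apply Hx.
    + apply Hy.
    + intros u Hu. apply Hx. intro E; apply Hu; rewrite E; ring.
    + intros u Hu. apply Hy. intro E; apply Hu; rewrite E; ring.
  - assert (E : lsum (fun w => f w * x w) sx = lsum (fun w => f w * x w) sigma).
    { apply lsum_indep; [apply Hx|apply H|..]; intros u Hu.
      apply Hx. intro E; apply Hu; rewrite E; ring.
      apply H. intro E; apply Hu; rewrite E; ring. }
    rewrite E. specialize (IHis_path sigma sy H0 Hy).
    pose proof (step_lip sigma x a H H0).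
    eapply Rle_trans; [|apply Rplus_le_compat; [exact H2|exact IHis_path]].
    eapply Rle_trans; [|apply Rabs_triang]. right; f_equal; ring.
Qed.
End Lip.

Theorem mainTheorem5 (V : Type) (K : SComplex V) (dh : V -> V -> R) (C : R)
  (hmet : is_metric dh) (hC : 0 < C)
  (hdG : forall u v n, dG_is K u v n -> dh u v <= C * INR n)
  (x y : V -> R) (sx sy : list V)
  (hx : in_simplex K sx x) (hy : in_simplex K sy y)
  (hdisj : forall u, x u <> 0 -> y u = 0)
  (d : R) (hd : dX_is K x y d) :
  Dhat dh x sx y sy <= 3 * C * d.
Proof.
  destruct hmet as [Hpos [Hzero [Hsym Htri]]].
  assert (Edge : forall s, simplex K s -> forall v w, In v s -> In w s -> dh v w <= C).
  { intros s Hs v w Hv Hw. destruct (classic (v = w)) as [<-|Hne].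
    - assert (dh v v = 0) by (apply Hzero; auto). lra.
    - assert (Hvw : simplex K [v; w]).
      { apply (simplex_sub K Hs); auto. discriminate.
        intros z [<-|[<-|[]]]; auto. }
      assert (dG_is K v w 1).
      { split. apply walk_cons with w; auto. constructor.
        intros m Hm. inversion Hm; subst. congruence. lia. }
      specialize (hdG _ _ _ H). simpl in hdG. lra. }
  assert (Main : forall L, is_path K x y L -> Dhat dh x sx y sy <= 3 * C * L).
  { intros L HL.
    set (f1 := fun w => if Req_EM_T (x w) 0 then 0 else 1).
    assert (L1 : 1 <= L).
    { pose proof (path_lip V K f1) as P.
      assert (Wf : forall s, simplex K s -> forall u v, In u s -> In v s -> f1 u - f1 v <= 1).
      { intros; unfold f1; destruct (Req_EM_T (x u) 0), (Req_EM_T (x v) 0); lra. }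
      specialize (P Wf x y L HL sx sy hx hy).
      rewrite (lsum_ext _ x) in P.
      2:{ intros u _; unfold f1; destruct (Req_EM_T (x u) 0); [rewrite e|]; ring. }
      rewrite (lsum_ext (fun w => f1 w * y w) (fun _ => 0 * 0)) in P.
      2:{ intros u _; unfold f1; destruct (Req_EM_T (x u) 0). ring. rewrite hdisj; auto; ring. }
      rewrite lsum_scal in P. destruct hx as [_ [_ [_ [_ Hs]]]]. rewrite Hs in P.
      rewrite Rmult_0_l, Rminus_0_r, Rabs_R1 in P. exact P. }
    set (B := 3 * C * L).
    assert (Hpair : forall u v, In u sx -> In v sy -> dh u v <= B).
    { intros u v Hu Hv.
      set (fu := fun w => dh u w / C).
      assert (Wf : forall s, simplex K s -> forall a b, In a s -> In b s -> fu a - fu b <= 1).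
      { intros s Hs a b Ha Hb. unfold fu. specialize (Htri u b a). rewrite (Hsym b a) in Htri.
        pose proof (Edge s Hs a b Ha Hb).
        apply Rmult_le_reg_r with C; auto. unfold Rdiv.
        replace ((dh u a * / C - dh u b * / C) * C) with (dh u a - dh u b) by (field; lra). lra. }
      pose proof (path_lip V K fu Wf x y L HL sx sy hx hy) as P.
      assert (Gx : lsum (fun w => fu w * x w) sx <= 1).
      { destruct hx as [Hs [_ [Hxp [_ Hs1]]]]. rewrite <- Hs1.
        apply lsum_le. intros w Hw. rewrite <- (Rmult_1_l (x w)) at 2.
        apply Rmult_le_compat_r; auto. unfold fu. apply Rmult_le_reg_r with C; auto.
        unfold Rdiv. rewrite Rmult_assoc, Rinv_l by lra. pose proof (Edge sx Hs u w Hu Hw); lra. }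
      assert (Gy : fu v <= lsum (fun w => fu w * y w) sy + 1).
      { destruct hy as [Hs [_ [Hyp [_ Hs1]]]].
        assert (lsum (fun w => (fu v - 1) * y w) sy <= lsum (fun w => fu w * y w) sy).
        { apply lsum_le. intros w Hw. apply Rmult_le_compat_r; auto.
          unfold fu. cut (dh u v - C <= dh u w). 
          { intro. apply Rmult_le_reg_r with C; auto. unfold Rdiv.
            replace ((dh u v * / C - 1) * C) with (dh u v - C) by (field; lra).
            rewrite Rmult_assoc, Rinv_l by lra. lra. }
          pose proof (Edge sy Hs w v Hw Hv). specialize (Htri u w v). lra. }
        rewrite lsum_scal, Hs1 in H. lra. }
      assert (P2 := Rle_trans _ _ _ (Rle_abs _) P). rewrite <- Rabs_Ropp in P. assert (P3 := Rle_trans _ _ _ (Rle_abs _) P).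
      assert (fu v <= L + 2) by lra. unfold fu in H.
      assert (dh u v <= C * (L + 2)).
      { apply Rmult_le_compat_l with (r := C) in H; [|lra].
        unfold Rdiv in H. replace (C * (dh u v * / C)) with (dh u v) in H by (field; lra). lra. }
      unfold B. nra. }
    assert (B0 : 0 <= B) by (unfold B; nra).
    destruct hx as [_ [_ [Hxp [_ Hxs]]]]. destruct hy as [_ [_ [Hyp [_ Hys]]]].
    unfold Dhat. apply Rle_trans with (lsum (fun u => B * x u) sx).
    - apply lsum_le. intros u Hu.
      apply Rle_trans with (lsum (fun v => (x u * B) * y v) sy).
      + apply lsum_le. intros v Hv. specialize (Hpair u v Hu Hv).
        specialize (Hxp u); specialize (Hyp v).
        replace (x u * y v * dh u v) with ((x u * y v) * dh u v) by ring.
        replace (x u * B * y v) with ((x u * y v) * B) by ring.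
        apply Rmult_le_compat_l; auto. apply Rmult_le_pos; auto.
      + rewrite lsum_scal, Hys. lra.
    - rewrite lsum_scal, Hxs. lra. }
  destruct hd as [_ Hinf].
  assert (Dhat dh x sx y sy / (3 * C) <= d).
  { apply Hinf. intros L HL. specialize (Main L HL).
    apply Rmult_le_reg_r with (3 * C); [lra|]. unfold Rdiv.
    rewrite Rmult_assoc, Rinv_l by lra. lra. }
  apply Rmult_le_compat_l with (r := 3 * C) in H; [|lra].
  unfold Rdiv in H. replace (3 * C * (Dhat dh x sx y sy * / (3 * C))) with (Dhat dh x sx y sy) in H by (field; lra).
  lra.
Qed.
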